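(* Let $G$ be an $n$-vertex graph, $k$ an integer, and $H\subseteq G$ a $k$-spanner of $G$ that contains a cycle. Let $C$ be any shortest cycle of $H$ and let $L_H$ be its length. If $2(n-k)\le L_H\le k+1$, then there exists an edge $e$ of $C$ such that $H\setminus\{e\}$ (the graph $H$ with edge $e$ removed) is still a $k$-spanner of $G$.
   Context: All graphs are undirected and unweighted. For a graph $G=(V,E)$ and integer $k$, a $k$-spanner of $G$ is a subgraph $H=(V,E')$, $E'\subseteq E$, with $\mathrm{dist}_H(u,v)\le k\cdot\mathrm{dist}_G(u,v)$ for all $u,v\in V$. *)

(* Defs.v *)
From mathcomp Require Import all_boot.
Set Implicit Arguments. Unset Strict Implicit. Unset Printing Implicit Defensive.

Definition simple_graph (T : finType) (g : rel T) : Prop :=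
  symmetric g /\ irreflexive g.

Definition walk (T : finType) (g : rel T) (u v : T) (m : nat) : Prop :=
  exists p : seq T, [/\ path g u p, last u p = v & size p = m].

(* d is the (finite) graph distance between u and v. If u,v are disconnected
   no d satisfies this (distance = infinity). *)
Definition is_dist (T : finType) (g : rel T) (u v : T) (d : nat) : Prop :=
  walk g u v d /\ forall m, walk g u v m -> d <= m.

Definition subgraph (T : finType) (h g : rel T) : Prop :=
  forall x y, h x y -> g x y.

(* H is a k-spanner of G: dist_H(u,v) <= k * dist_G(u,v) for all u, v
   (with the convention that the inequality is vacuous when dist_G(u,v) = oo,
   and that dist_H(u,v) must be finite when dist_G(u,v) is). *)
Definition spanner (T : finType) (g h : rel T) (k : nat) : Prop :=
  subgraph h g /\
  forall u v dG, is_dist g u v dG -> exists dH, is_dist h u v dH /\ dH <= k * dG.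

Definition is_cycle (T : finType) (g : rel T) (c : seq T) : Prop :=
  3 <= size c /\ ucycle g c.

Definition shortest_cycle (T : finType) (g : rel T) (c : seq T) : Prop :=
  is_cycle g c /\ forall c', is_cycle g c' -> size c <= size c'.

Definition cycle_edge (T : finType) (c : seq T) (a b : T) : Prop :=
  a \in c /\ b = next c a.

Definition remove_edge (T : finType) (h : rel T) (a b : T) : rel T :=
  fun x y => h x y && ~~ (((x == a) && (y == b)) || ((x == b) && (y == a))).

(* Main.v *)
Require Import Defs.
From mathcomp Require Import all_boot.
From mathcomp Require Import zify.
From Stdlib Require Import Classical.
Set Implicit Arguments. Unset Strict Implicit. Unset Printing Implicit Defensive.

Lemma walk0 (T : finType) (g : rel T) u : walk g u u 0.
Proof. by exists [::]. Qed.

Lemma walk_cat (T : finType) (g : rel T) u v w m1 m2 :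
  walk g u v m1 -> walk g v w m2 -> walk g u w (m1 + m2).
Proof.
move=> [p1 [h1 l1 s1]] [p2 [h2 l2 s2]]; exists (p1 ++ p2); split.
- by rewrite cat_path h1 l1 h2.
- by rewrite last_cat l1.
- by rewrite size_cat s1 s2.
Qed.

Lemma walk_sym (T : finType) (g : rel T) u v m :
  symmetric g -> walk g u v m -> walk g v u m.
Proof.
move=> sg [p [hp lp sp]]; exists (rev (belast u p)); split.
- rewrite -lp rev_path; apply: sub_path hp => x y /=; by rewrite sg.
- case: p hp lp sp => [|z p] /= _ <- _ //.
  by rewrite rev_cons last_rcons.
- by rewrite size_rev size_belast.
Qed.

Lemma remove_edge_sym (T : finType) (h : rel T) a b :
  symmetric h -> symmetric (remove_edge h a b).
Proof.
move=> sh x y; rewrite /remove_edge sh.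
by case: (x == a); case: (x == b); case: (y == a); case: (y == b).
Qed.

Lemma nth_rot' (T : Type) (x0 : T) (s : seq T) n t :
  n <= size s -> t < size s -> nth x0 (rot n s) t = nth x0 s ((t + n) %% size s).
Proof.
move=> hn ht; rewrite /rot nth_cat size_drop.
case: ltnP => h1.
- have e0 : t + n < size s by rewrite addnC -ltn_subRL.
  by rewrite nth_drop modn_small // addnC.
- have e1 : t - (size s - n) < n by lia.
  rewrite nth_take //.
  have -> : t + n = (t - (size s - n)) + size s by lia.
  by rewrite modnDr modn_small //; apply: leq_trans e1 hn.
Qed.

Lemma seg_walk (T : finType) (H : rel T) (Cr : seq T) (x0 : T) i j :
  uniq Cr -> 3 <= size Cr -> cycle H Cr -> i <= j -> j < size Cr ->
  walk (remove_edge H (last x0 Cr) (head x0 Cr)) (nth x0 Cr i) (nth x0 Cr j) (j - i).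
Proof.
move=> uC sC cC hij hj; set L := size Cr in sC hj *.
have lastE : last x0 Cr = nth x0 Cr (size Cr - 1).
  by rewrite (last_nth x0); move: sC; case: (Cr) => [|y s] //= _; rewrite subn1.
have headE : head x0 Cr = nth x0 Cr 0 by case: (Cr).
have step : forall t, t.+1 < size Cr ->
    remove_edge H (last x0 Cr) (head x0 Cr) (nth x0 Cr t) (nth x0 Cr t.+1).
  move=> t ht; apply/andP; split.
  - by move: cC; rewrite (cycle_path x0) => /(pathP x0) /(_ t.+1 ht) /=.
  - rewrite lastE headE !nth_uniq //; rewrite -?/L; try lia.
exists [seq nth x0 Cr t | t <- iota i.+1 (j - i)]; split.
- apply/(pathP x0) => t; rewrite size_map size_iota => ht.
  rewrite (nth_map 0) ?size_iota // nth_iota //.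
  case: t ht => [|t] ht /=.
  + by rewrite addn0; apply: step; lia.
  + rewrite (nth_map 0) ?size_iota; last by lia.
    rewrite nth_iota; last by lia.
    have -> : (i.+1 + t.+1) = (i.+1 + t).+1 by lia.
    apply: step; lia.
- rewrite (last_nth x0) size_map size_iota.
  case E: (j - i) => [|d].
  + by have -> : j = i by lia.
  + change (nth x0 [seq nth x0 Cr t | t <- iota i.+1 d.+1] d = nth x0 Cr j).
    rewrite (nth_map 0) ?size_iota // nth_iota //.
    congr nth; lia.
- by rewrite size_map size_iota.
Qed.
Lemma next_last_head (T : eqType) (s : seq T) x0 :
  uniq s -> 0 < size s -> next s (last x0 s) = head x0 s.
Proof.
case: s => [|y p] // uy _.
rewrite next_nth last_cons mem_last.
have -> : index (last y p) (y :: p) = size p.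
  by rewrite (last_nth y) index_uniq.
by rewrite nth_default.
Qed.

Definition Crot (T : eqType) (C : seq T) (a : T) := rot (index a C).+1 C.

Lemma crot_facts (T : finType) (H : rel T) (C : seq T) (x0 a : T) :
  uniq C -> 3 <= size C -> cycle H C -> a \in C ->
  [/\ uniq (Crot C a), size (Crot C a) = size C, cycle H (Crot C a),
      last x0 (Crot C a) = a & head x0 (Crot C a) = next C a].
Proof.
move=> uC sC cC aC.
have ia : index a C < size C by rewrite index_mem.
have la : last x0 (Crot C a) = a.
  rewrite (last_nth x0) /Crot size_rot.
  have -> : nth x0 (x0 :: rot (index a C).+1 C) (size C) =
            nth x0 (rot (index a C).+1 C) (size C - 1).
    by case: (size C) sC => [|l] //= _; rewrite subn1.
  rewrite nth_rot' //; last by rewrite subn1 prednK // ltnW // ltnW.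
  have -> : size C - 1 + (index a C).+1 = index a C + size C.
    lia.
  by rewrite modnDr modn_small // nth_index.
split => //.
- by rewrite /Crot rot_uniq.
- by rewrite /Crot size_rot.
- by rewrite /Crot rot_cycle.
- have hn := @next_last_head _ (Crot C a) x0.
  rewrite la in hn; rewrite -(next_rot (index a C).+1 uC) -/(Crot C a) hn //.
  + by rewrite /Crot rot_uniq.
  + by rewrite /Crot size_rot ltnW // ltnW.
Qed.
Lemma mod_inj_1L (L x y : nat) : x < L -> y < L -> x.+1 = y.+1 %[mod L] -> x = y.
Proof.
move=> hx hy.
case: (ltnP x.+1 L) => h1; case: (ltnP y.+1 L) => h2.
- by rewrite !modn_small // => [[]].
- have -> : y.+1 = L by apply/eqP; rewrite eqn_leq h2 hy.
  rewrite modnn modn_small // => h; lia.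
- have -> : x.+1 = L by apply/eqP; rewrite eqn_leq h1 hx.
  rewrite modnn (modn_small h2) => h; lia.
- lia.
Qed.

Lemma crot_inj (T : finType) (C : seq T) u :
  uniq C -> u \in C -> {in C &, injective (fun a => index u (Crot C a))}.
Proof.
move=> uC uin a a' aC a'C /= e.
have ia := aC; rewrite -index_mem in ia.
have ia' := a'C; rewrite -index_mem in ia'.
set t := index u (Crot C a) in e.
have ht : t < size C by rewrite /t -(size_rot (index a C).+1) index_mem mem_rot.
have n1 : nth u C ((t + (index a C).+1) %% size C) = u.
  rewrite -nth_rot' //; rewrite /t -/(Crot C a) nth_index // /Crot mem_rot //.
have n2 : nth u C ((t + (index a' C).+1) %% size C) = u.
  rewrite -nth_rot' //; rewrite e -/(Crot C a') nth_index // /Crot mem_rot //.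
have hsz : 0 < size C by case: (size C) ht.
have e1 := @nth_uniq _ u C _ _ (ltn_pmod (t + (index a C).+1) hsz)
                (ltn_pmod (t + (index a' C).+1) hsz) uC.
rewrite n1 n2 eqxx in e1.
move: e1; move/esym.
rewrite eqn_modDl => /eqP /(mod_inj_1L ia ia') h.
by rewrite -(nth_index u aC) -(nth_index u a'C) h.
Qed.
Definition Ho (T : finType) (H : rel T) (C : seq T) : rel T :=
  fun x y => [&& H x y, x \notin C & y \notin C].
Definition Kc (T : finType) (H : rel T) (C : seq T) x : {set T} :=
  [set v | connect (Ho H C) x v].
Definition Att (T : finType) (H : rel T) (C : seq T) x : {set T} :=
  [set c | (c \in C) && [exists v, connect (Ho H C) x v && H v c]].
Definition rep (T : finType) (H : rel T) (C : seq T) x : option T :=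
  if x \in C then Some x else [pick c in Att H C x].
Definition wt (T : finType) (H : rel T) (C : seq T) x :=
  if x \in C then 0 else #|Kc H C x|.
Definition Wc (T : finType) (H : rel T) (C : seq T) c :=
  #|[set v | (v \notin C) && (rep H C v == Some c)]|.

Lemma Ho_sym (T : finType) (H : rel T) C : symmetric H -> symmetric (Ho H C).
Proof. by move=> sH x y; rewrite /Ho sH; case: (x \in C); case: (y \in C). Qed.

Lemma conn_off (T : finType) (H : rel T) C x v :
  connect (Ho H C) x v -> x \notin C -> v \notin C.
Proof.
move/connectP => [p hp ->]; elim: p x hp => //= y p IH x /andP[/and3P[_ _ hy] hp] _.
exact: IH.
Qed.

Lemma att_conn (T : finType) (H : rel T) C x y :
  symmetric H -> connect (Ho H C) x y -> Att H C x = Att H C y.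
Proof.
move=> sH hxy; have cs := sym_connect_sym (Ho_sym C sH).
apply/setP => c; rewrite !inE; congr (_ && _).
apply/existsP/existsP => [[v /andP[hxv hv]]|[v /andP[hyv hv]]]; exists v; rewrite hv andbT.
- by apply: connect_trans hxv; rewrite cs.
- exact: connect_trans hxy hyv.
Qed.

Lemma rep_conn (T : finType) (H : rel T) C x y :
  symmetric H -> x \notin C -> connect (Ho H C) x y -> rep H C x = rep H C y.
Proof.
move=> sH hx hxy; rewrite /rep (negbTE hx) (negbTE (conn_off hxy hx)).
by rewrite (att_conn sH hxy).
Qed.

Lemma rep_in (T : finType) (H : rel T) C x c : rep H C x = Some c -> c \in C.
Proof.
rewrite /rep; case: ifP => [hx [<-] //|_].
by case: pickP => // c' + [<-]; rewrite inE => /andP[].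
Qed.

Lemma wt_le_W (T : finType) (H : rel T) C x c :
  symmetric H -> rep H C x = Some c -> wt H C x <= Wc H C c.
Proof.
move=> sH; rewrite /wt; case: ifP => // /negbT hx h.
apply: subset_leq_card; apply/subsetP => v; rewrite !inE => hv.
by rewrite (conn_off hv hx) -(rep_conn sH hx hv) h /=.
Qed.

Lemma card_sum (T : finType) (A : {set T}) : #|A| = \sum_v (v \in A : nat).
Proof.
rewrite -sum1_card big_mkcond /=; apply: eq_bigr => v _; by case: (v \in A).
Qed.

Lemma sumW_le (T : finType) (H : rel T) C :
  \sum_(c in [set c | c \in C]) Wc H C c <= #|[set v | v \notin C]|.
Proof.
rewrite /Wc.
under eq_bigr => c _ do rewrite card_sum.
rewrite exchange_big /= card_sum; apply: leq_sum => v _.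
rewrite !inE.
case: (boolP (v \in C)) => hv /=.
  by rewrite big1 // => c _; rewrite inE hv.
case hr: (rep H C v) => [c0|]; last first.
  by rewrite big1 // => c _; rewrite inE hv hr.
case: (boolP (c0 \in [set c | c \in C])) => hc0.
- rewrite (bigD1 c0) //= big1; first by rewrite inE hv hr eqxx.
  by move=> c /andP[_ hc]; rewrite inE hv hr /=; case: eqP => // [[]] e; move: hc; rewrite e eqxx.
- rewrite big1 // => c hc; rewrite inE hv hr /=; case: eqP => // [[]] e.
  by move: hc0; rewrite e hc.
Qed.

Lemma Ho_rem (T : finType) (H : rel T) C a b :
  a \in C -> b \in C -> forall y z, Ho H C y z -> remove_edge H a b y z.
Proof.
move=> aC bC y z /and3P[hyz hy hz]; rewrite /remove_edge hyz /=.
have ya : (y == a) = false by apply/eqP => e; move: hy; rewrite e aC.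
have yb : (y == b) = false by apply/eqP => e; move: hy; rewrite e bC.
by rewrite ya yb.
Qed.

Lemma short_conn (T : finType) (H : rel T) C x y :
  connect (Ho H C) x y ->
  exists p, [/\ path (Ho H C) x p, last x p = y & (size p).+1 <= #|Kc H C x|].
Proof.
move/connectP => [p hp ->].
case: (shortenP hp) => p' hp' up' _.
exists p'; split => //.
rewrite cardE -[(size p').+1]/(size (x :: p')).
apply: uniq_leq_size => // z hz; rewrite mem_enum inE.
exact: (path_connect hp').
Qed.

Lemma tail (T : finType) (H : rel T) C a b x c :
  a \in C -> b \in C -> rep H C x = Some c ->
  exists l, l <= wt H C x /\ walk (remove_edge H a b) x c l.
Proof.
move=> aC bC; rewrite /rep /wt; case: ifP => [hx [<-]|/negbT hx].
  by exists 0; split => //; exact: walk0.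
case: pickP => // c' + [<-]; rewrite inE => /andP[c'C /existsP[v /andP[hxv hvc]]].
have [p [hp lp sp]] := short_conn hxv.
exists (size p).+1; split => //.
exists (rcons p c'); split.
- rewrite rcons_path (sub_path (Ho_rem aC bC) hp) lp /= /remove_edge hvc /=.
  have hv := conn_off hxv hx.
  have va : (v == a) = false by apply/eqP => e; move: hv; rewrite e aC.
  have vb : (v == b) = false by apply/eqP => e; move: hv; rewrite e bC.
  by rewrite va vb.
- by rewrite last_rcons.
- by rewrite size_rcons.
Qed.

Lemma same_comp (T : finType) (H : rel T) C a b x y :
  a \in C -> b \in C -> connect (Ho H C) x y ->
  exists l, l <= #|Kc H C x| /\ walk (remove_edge H a b) x y l.
Proof.
move=> aC bC hxy; have [p [hp lp sp]] := short_conn hxy.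
exists (size p); split; first exact: ltnW.
by exists p; split => //; exact: (sub_path (Ho_rem aC bC) hp).
Qed.

Lemma norep (T : finType) (H : rel T) C x y d :
  rep H C x = None -> walk H x y d -> x \notin C /\ connect (Ho H C) x y.
Proof.
rewrite /rep; case: ifP => // /negbT hx; case: pickP => // hnone _ [p [hp lp _]].
split => //; rewrite -lp.
suff gen : forall z, connect (Ho H C) x z -> path H z p ->
    connect (Ho H C) x (last z p).
  by apply: gen; [exact: connect0 | exact: hp].
elim: p {hp lp} => [|w p IH] z hz //= /andP[hzy hp].
apply: IH hp.
have hzC := conn_off hz hx.
case yC: (w \in C).
- exfalso; have := hnone w; rewrite inE yC /=.
  by move=> /negbT /existsPn /(_ z); rewrite hz hzy.
- apply: connect_trans hz (connect1 _); by rewrite /Ho hzy hzC yC.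
Qed.
Lemma Kc_off (T : finType) (H : rel T) C x :
  x \notin C -> #|Kc H C x| <= #|[set v | v \notin C]|.
Proof.
move=> hx; apply: subset_leq_card; apply/subsetP => v; rewrite !inE => hv.
exact: conn_off hv hx.
Qed.

Lemma wt_sum (T : finType) (H : rel T) C x y : symmetric H ->
  ~~ [&& x \notin C, y \notin C & connect (Ho H C) x y] ->
  wt H C x + wt H C y <= #|[set v | v \notin C]|.
Proof.
move=> sH; rewrite /wt; case: ifP => hx; case: ifP => hy //= hn.
- by rewrite add0n Kc_off // hy.
- by rewrite addn0 Kc_off // hx.
- rewrite -cardsUI.
  have -> : Kc H C x :&: Kc H C y = set0.
    apply/setP => v; rewrite !inE; apply/negP => /andP[hxv hyv].
    move/negP: hn; apply.
    apply: connect_trans hxv _; by rewrite (sym_connect_sym (Ho_sym C sH)).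
  rewrite cards0 addn0; apply: subset_leq_card; apply/subsetP => v.
  rewrite !inE => /orP[] hv; [exact: conn_off hv (negbT hx) | exact: conn_off hv (negbT hy)].
Qed.

Lemma blocked (T : finType) (H : rel T) (C : seq T) (k : nat) (a : T) :
  symmetric H -> uniq C -> 3 <= size C -> cycle H C -> a \in C ->
  #|[set v | v \notin C]| <= k ->
  forall x y d, walk H x y d ->
  (forall l, l <= k -> ~ walk (remove_edge H a (next C a)) x y l) ->
  exists u v, [/\ u \in C, v \in C, u != v &
     k.+1 <= Wc H C u + Wc H C v + (index u (Crot C a) - index v (Crot C a))
                                  + (index v (Crot C a) - index u (Crot C a))].
Proof.
move=> sH uC sC cC aC mk x y d hw hb.
set R := remove_edge H a (next C a).
have bC : next C a \in C by rewrite mem_next.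
have sR : symmetric R by apply: remove_edge_sym.
have csym := sym_connect_sym (Ho_sym C sH).
have nsame : ~~ [&& x \notin C, y \notin C & connect (Ho H C) x y].
  apply/negP => /and3P[hx hy hxy].
  have [l [hl hwl]] := same_comp aC bC hxy.
  exact: (hb l (leq_trans hl (leq_trans (@Kc_off _ H C x hx) mk)) hwl).
case hrx: (rep H C x) => [p|]; last first.
  have [hx hxy] := norep hrx hw.
  by move: nsame; rewrite hx (conn_off hxy hx) hxy.
case hry: (rep H C y) => [q|]; last first.
  have [hy hyx] := norep hry (walk_sym sH hw).
  by move: nsame; rewrite hy (conn_off hyx hy) csym hyx.
have [l1 [hl1 w1]] := tail aC bC hrx.
have [l2 [hl2 w2]] := tail aC bC hry.
have w2' := walk_sym sR w2.
have hs := wt_sum sH nsame.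
have pC := rep_in hrx; have qC := rep_in hry.
have hWp := wt_le_W sH hrx; have hWq := wt_le_W sH hry.
case: (eqVneq p q) => [epq|npq].
  exfalso; rewrite -epq in w2'; apply: (hb (l1 + l2)); last exact: walk_cat w1 w2'.
  clear -hl1 hl2 hs mk; lia.
exists p, q; split => //.
have [uCr sCr cCr lCr hCr] := crot_facts a uC sC cC aC.
set Cr := Crot C a in uCr sCr cCr lCr hCr *.
set ip := index p Cr; set iq := index q Cr.
have pCr : p \in Cr by rewrite /Cr /Crot mem_rot.
have qCr : q \in Cr by rewrite /Cr /Crot mem_rot.
have ipL : ip < size Cr by rewrite /ip index_mem.
have iqL : iq < size Cr by rewrite /iq index_mem.
have sCr3 : 3 <= size Cr by rewrite sCr.
have seg : walk R p q (ip - iq + (iq - ip)).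
  case: (leqP ip iq) => h.
  - have := seg_walk a uCr sCr3 cCr h iqL.
    rewrite lCr hCr !nth_index // -/R.
    have -> : ip - iq + (iq - ip) = iq - ip by clear -h; lia.
    by [].
  - have := seg_walk a uCr sCr3 cCr (ltnW h) ipL.
    rewrite lCr hCr !nth_index // -/R => /(walk_sym sR).
    have -> : ip - iq + (iq - ip) = ip - iq by clear -h; lia.
    by [].
have wtot := walk_cat (walk_cat w1 seg) w2'.
case: (leqP k.+1 (Wc H C p + Wc H C q + (ip - iq) + (iq - ip))) => // hlt.
exfalso; apply: (hb _ _ wtot); clear -hl1 hl2 hWp hWq hlt; lia.
Qed.
Lemma card_small_img (T : finType) (E B : {set T}) (f : T -> nat) (lo n : nat) :
  B \subset E -> {in E &, injective f} ->
  (forall a, a \in B -> lo <= f a < lo + n) -> #|B| <= n.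
Proof.
move=> sBE injf hB.
rewrite cardE -(size_map f) -(size_iota lo n).
apply: uniq_leq_size.
  rewrite map_inj_in_uniq ?enum_uniq //.
  move=> x y; rewrite !mem_enum => xB yB; apply: injf; exact: (subsetP sBE).
move=> z /mapP[a]; rewrite mem_enum => aB ->.
by rewrite mem_iota; apply: hB.
Qed.

Lemma sum_ge_card (T : finType) (E U : {set T}) (B : T -> {set T}) :
  (forall a, a \in E -> exists w, w \in U /\ a \in B w) ->
  #|E| <= \sum_(w in U) #|B w|.
Proof.
move=> hcov.
rewrite -sum1_card.
apply: (@leq_trans (\sum_(a in E) \sum_(w in U) (a \in B w : nat))).
  apply: leq_sum => a aE.
  have [w [wU awB]] := hcov a aE.
  by rewrite (bigD1 w) //= awB.
rewrite exchange_big /=; apply: leq_sum => w wU.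
apply: (@leq_trans (\sum_(a in B w) 1)); last by rewrite sum1_card.
rewrite [X in _ <= X](bigID (fun a => a \in E)) /=.
apply: leq_trans (leq_addr _ _).
rewrite big_mkcond [X in _ <= X]big_mkcond /=.
apply: leq_sum => a _.
by case: (a \in E); case: (a \in B w).
Qed.
Lemma count_contra (T : finType) (E U : {set T}) (L m k : nat) (W : T -> nat)
    (rp : T -> T -> nat) :
  #|E| = L -> 0 < L -> L <= k.+1 ->
  (forall a u, a \in E -> u \in U -> rp a u < L) ->
  (forall u, u \in U -> {in E &, injective (rp^~ u)}) ->
  \sum_(u in U) W u <= m ->
  2 * (L + m - k) <= L ->
  (forall a, a \in E -> exists u v, [/\ u \in U, v \in U, u != v &
       k.+1 <= W u + W v + (rp a u - rp a v) + (rp a v - rp a u)]) ->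
  False.
Proof.
move=> cardE Lpos Lk rpL rpinj sumW hLm cover.
have [a0 a0E] : exists a, a \in E.
  by apply/set0Pn; rewrite -card_gt0 cardE.
have [u0 [v0 [u0U v0U uv0 cov0]]] := cover a0 a0E.
pose s := k.+1 - L.
have Wpair : forall a u v, a \in E -> u \in U -> v \in U ->
   k.+1 <= W u + W v + (rp a u - rp a v) + (rp a v - rp a u) -> s.+1 <= W u + W v.
  move=> a u v aE uU vU h; have := rpL a u aE uU; have := rpL a v aE vU; rewrite /s; lia.
have W0 := Wpair _ _ _ a0E u0U v0U cov0.
have [c cU Wmax] : exists2 c, c \in U & forall w, w \in U -> W w <= W c.
  case: (@arg_maxnP _ u0 (fun w => w \in U) W u0U) => c cU h.
  by exists c.
pose M := W c.
pose r := fun w => if w == c then M - s else W w - (s - M).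
have pair_r : forall u v, u \in U -> v \in U -> u != v -> s.+1 <= W u + W v ->
    W u + W v <= r u + r v + s.
  move=> u v uU vU uv h; have hu := Wmax u uU; have hv := Wmax v vU.
  rewrite /r; case: (eqVneq u c) => [eu|nu]; case: (eqVneq v c) => [ev|nv].
  - by move: uv; rewrite eu ev eqxx.
  - rewrite -/M in hu hv *; rewrite eu -/M; lia.
  - rewrite -/M in hu hv *; rewrite ev -/M; lia.
  - rewrite -/M in hu hv *; lia.
pose B := fun w => [set a in E | (rp a w < r w) || (L - r w <= rp a w)].
have hcov : forall a, a \in E -> exists w, w \in U /\ a \in B w.
  move=> a aE; have [u [v [uU vU uv h]]] := cover a aE.
  have h1 := Wpair _ _ _ aE uU vU h.
  have h2 := pair_r _ _ uU vU uv h1.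
  have := rpL a u aE uU; have := rpL a v aE vU.
  rewrite /B => hv hu.
  rewrite /s in h1 h2.
  case: (leqP (rp a u) (rp a v)) => hle.
  - case: (ltnP (rp a u) (r u)) => hh.
    + by exists u; split => //; rewrite inE aE hh.
    + exists v; split => //; rewrite inE aE; apply/orP; right; lia.
  - case: (ltnP (rp a v) (r v)) => hh.
    + by exists v; split => //; rewrite inE aE hh.
    + exists u; split => //; rewrite inE aE; apply/orP; right; lia.
have cardB : forall w, w \in U -> #|B w| <= 2 * r w.
  move=> w wU.
  have -> : B w = [set a in E | rp a w < r w] :|: [set a in E | L - r w <= rp a w].
    by apply/setP => a; rewrite !inE; case: (a \in E).
  apply: (leq_trans (leq_card_setU _ _)).
  rewrite mul2n -addnn; apply: leq_add.
  - apply: (@card_small_img _ E _ (rp^~ w) 0) => //.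
    + by apply/subsetP => a; rewrite inE => /andP[].
    + exact: rpinj.
    + by move=> a; rewrite inE => /andP[_ ->].
  - apply: (@card_small_img _ E _ (rp^~ w) (L - r w)) => //.
    + by apply/subsetP => a; rewrite inE => /andP[].
    + exact: rpinj.
    + move=> a; rewrite inE => /andP[aE ->] /=; have := rpL a w aE wU; lia.
have L1 : L <= 2 * \sum_(w in U) r w.
  rewrite -cardE big_distrr /=.
  apply: (leq_trans (sum_ge_card hcov)).
  by apply: leq_sum => w wU; apply: cardB.
have sumUV : W u0 + W v0 <= \sum_(w in U) W w.
  rewrite (bigD1 u0) //= (bigD1 v0) /=; last by rewrite v0U eq_sym uv0.
  by rewrite addnA leq_addr.
have sumr : \sum_(w in U) r w + s <= \sum_(w in U) W w.
  rewrite (bigD1 c) //= [X in _ <= X](bigD1 c) //=.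
  case: (leqP s M) => hsM.
  - have -> : \sum_(i in U | i != c) r i = \sum_(i in U | i != c) W i.
      apply: eq_bigr => w /andP[_ wc]; rewrite /r (negbTE wc).
      have h0 : s - M = 0 by lia.
      by rewrite h0 subn0.
    rewrite /r eqxx -/M; lia.
  - have [w1 [w1U w1c hw1]] : exists w1, [/\ w1 \in U, w1 != c & s.+1 - M <= W w1].
      have hu := Wmax u0 u0U; have hv := Wmax v0 v0U.
      case: (eqVneq u0 c) => [eu|nu].
      + exists v0; split => //; first by rewrite -eu eq_sym.
        rewrite -/M; move: W0; rewrite eu -/M; lia.
      + exists u0; split => //; rewrite -/M; rewrite -/M in hv; lia.
    rewrite (bigD1 w1) /=; last by rewrite w1U w1c.
    rewrite [X in _ <= _ + X](bigD1 w1) /=; last by rewrite w1U w1c.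
    have hle : \sum_(i | (i \in U) && (i != c) && (i != w1)) r i <=
               \sum_(i | (i \in U) && (i != c) && (i != w1)) W i.
      apply: leq_sum => w /andP[/andP[_ wc] _]; rewrite /r (negbTE wc); exact: leq_subr.
    have hw1' : r w1 = W w1 - (s - M) by rewrite /r (negbTE w1c).
    have rc : r c = 0 by rewrite /r eqxx; lia.
    rewrite rc hw1'; lia.
rewrite /s in sumr W0 sumUV.
lia.
Qed.
Lemma is_dist_min (T : finType) (g : rel T) u v D :
  walk g u v D -> exists d, is_dist g u v d /\ d <= D.
Proof.
move=> hw.
suff gen : forall N D', D' <= N -> walk g u v D' -> exists d, is_dist g u v d /\ d <= D'.
  exact: (gen D D (leqnn D) hw).
elim=> [|N IH] D' hDN hw'.
  have hD0 : D' = 0 by clear -hDN; lia.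
  by exists 0; split => //; split; [rewrite -hD0 | by []].
case: (classic (exists m, m < D' /\ walk g u v m)) => [[m [hm hwm]]|hno].
- have [d [hd hdm]] := IH m ltac:(clear -hm hDN; lia) hwm.
  by exists d; split => //; clear -hdm hm; lia.
- exists D'; split => //; split => // m hwm.
  case: (leqP D' m) => // hlt; exfalso; apply: hno; exists m; split => //.
Qed.

Theorem lemma3p1 (T : finType) (G H : rel T) (k : nat) (C : seq T) :
  simple_graph G -> simple_graph H ->
  spanner G H k ->
  shortest_cycle H C ->
  2 * (#|T| - k) <= size C <= k + 1 ->
  exists a b, cycle_edge C a b /\ spanner G (remove_edge H a b) k.
Proof.
move=> [sG iG] [sH iH] [subHG spanH] [[sC3 /andP[cC uC]] _] /andP[hnk hLk].
set L := size C in sC3 hnk hLk.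
set m := #|[set v | v \notin C]|.
have cu : #|C| = size C by apply/card_uniqP.
have hn : #|T| = L + m.
  rewrite -(cardC (mem C)) /L -cu /m; congr (_ + _).
  by apply: eq_card => v; rewrite !inE.
have mk : m <= k by lia.
have cardCs : #|[set c | c \in C]| = L.
  by rewrite /L -cu; apply: eq_card => v; rewrite inE.
have good : exists a, a \in C /\ forall x y d, walk H x y d -> d <= k ->
    exists l, l <= k /\ walk (remove_edge H a (next C a)) x y l.
  apply: NNPP => hng.
  apply: (@count_contra T [set c | c \in C] [set c | c \in C] L m k (Wc H C)
            (fun a u => index u (Crot C a))) => //.
  - lia.
  - lia.
  - move=> a u; rewrite !inE => aC uC'.
    by rewrite /L -(size_rot (index a C).+1 C) index_mem /Crot mem_rot.
  - move=> u; rewrite inE => uC' a a'; rewrite !inE => aC a'C.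
    exact: (crot_inj uC uC').
  - exact: sumW_le.
  - lia.
  - move=> a; rewrite inE => aC.
    apply: NNPP => hnc; apply: hng; exists a; split => //.
    move=> x y d hw hd; apply: NNPP => hno.
    have [u [v [uC' vC' uv h]]] : exists u v, [/\ u \in C, v \in C, u != v &
     k.+1 <= Wc H C u + Wc H C v + (index u (Crot C a) - index v (Crot C a))
                                  + (index v (Crot C a) - index u (Crot C a))].
      apply: (blocked sH uC sC3 cC aC mk hw) => l hl hwl; apply: hno; by exists l.
    by apply: hnc; exists u, v; rewrite !inE.
case: good => a [aC hgood].
set R := remove_edge H a (next C a).
exists a, (next C a); split; first by [].
split.
  by move=> x y /andP[hxy _]; apply: subHG.
move=> u v dG [[p [hp lp sp]] _].
have : exists D, D <= k * size p /\ walk R u (last u p) D.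
  elim: p u {lp sp} hp => [|z p IH] u /=.
    by move=> _; exists 0; split => //; exact: walk0.
  move/andP => [huz hp].
  have [D [hD hwD]] := IH z hp.
  have hdist : is_dist G u z 1.
    split; first by exists [:: z]; rewrite /= huz.
    move=> m' [[|w q] [hq lq sq]]; last by rewrite -sq.
    by move: huz; rewrite /= in lq; rewrite lq iG.
  have [dH [[hwH _] hdH]] := spanH u z 1 hdist.
  have [l [hl hwl]] := hgood u z dH hwH ltac:(lia).
  exists (l + D); split; last exact: walk_cat hwl hwD.
  rewrite mulnS; lia.
case => D [hD hwD]; rewrite lp sp in hD hwD.
have [d [hd hdD]] := is_dist_min hwD.
by exists d; split => //; lia.
Qed.
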